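(* There is a function $C(t,\epsilon)$ such that the following holds for every positive integer $t$ and every $\epsilon\in(0,1)$: let $G$ be a connected balanced bipartite graph with parts $X,Y$ each of order $n$, with $\delta(G)\geq 3C(t,\epsilon)$ and with no induced $S_{t,t}$. Then for any two vertices $a,b$ in the same part of $G$ there is a vertex $c$ in that same part such that $|N(a)\setminus N(c)|\leq \epsilon|N(a)|$ and $|N(b)\setminus N(c)|\leq \epsilon|N(b)|$.
   Context: For positive integers $a,b$, the biclaw $S_{a,b}$ is the graph with vertex set $\{x,x_1,\dots,x_a,y,y_1,\dots,y_b\}$ and edges $xy$, $xy_1,\dots,xy_b$, $yx_1,\dots,yx_a$; ''no induced $S_{t,t}$'' means no induced subgraph isomorphic to $S_{t,t}$. $N(v)$ is the neighbourhood of $v$ and $\delta(G)$ the minimum degree. *)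

(* Defs.v *)
From HB Require Import structures.
From mathcomp Require Import all_boot all_order all_algebra.
From mathcomp Require Export reals.
Set Implicit Arguments. Unset Strict Implicit. Unset Printing Implicit Defensive.

(* A simple graph is a symmetric irreflexive relation [E] on a finite type [T];
   the vertex set is all of [T]. *)
Definition simple_graph (T : finType) (E : rel T) : Prop :=
  symmetric E /\ irreflexive E.

Definition nbhd (T : finType) (E : rel T) (v : T) : {set T} := [set u | E v u].

Definition connected_graph (T : finType) (E : rel T) : Prop :=
  forall u v : T, connect E u v.

Definition bipartition (T : finType) (E : rel T) (X Y : {set T}) : Prop :=
  [/\ X :&: Y = set0, X :|: Y = setT &
      forall u v, E u v -> (u \in X) && (v \in Y) || (u \in Y) && (v \in X)].

(* Vertices of the biclaw S_{a,b}:
   inl (inl tt) = x,  inl (inr tt) = y,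
   inr (inl i)  = x_i (i < a),  inr (inr j) = y_j (j < b). *)
Definition biclaw_vtx (a b : nat) : finType :=
  ((unit + unit) + ('I_a + 'I_b))%type.

(* Edges: xy, x y_j (all j), y x_i (all i). *)
Definition biclaw_adj (a b : nat) (u v : biclaw_vtx a b) : bool :=
  match u, v with
  | inl (inl _), inl (inr _) => true
  | inl (inr _), inl (inl _) => true
  | inl (inl _), inr (inr _) => true
  | inr (inr _), inl (inl _) => true
  | inl (inr _), inr (inl _) => true
  | inr (inl _), inl (inr _) => true
  | _, _ => false
  end.

Definition has_induced_biclaw (T : finType) (E : rel T) (a b : nat) : Prop :=
  exists f : biclaw_vtx a b -> T,
    injective f /\ forall u v, E (f u) (f v) = biclaw_adj u v.

(* Main.v *)
Require Import Defs.
From HB Require Import structures.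
From mathcomp Require Import all_boot all_order all_algebra.
From mathcomp Require Import reals.
From mathcomp Require Import ring lra zify.
From Stdlib Require Import Lia.
Import Order.TTheory GRing.Theory Num.Theory.
Local Open Scope ring_scope.
Set Implicit Arguments. Unset Strict Implicit.

Lemma side_edge {T : finType} {E : rel T} {X Y : {set T}} :
  bipartition E X Y -> forall u v, E u v -> (u \in X) = (v \notin X).
Proof.
case=> XY0 XYT h u v /h.
have inY w : (w \in Y) = (w \notin X).
  apply/idP/idP => [wY|wX].
    apply/negP=> wX. have: w \in X :&: Y by rewrite inE wX wY.
    by rewrite XY0 inE.
  have: w \in X :|: Y by rewrite XYT inE.
  by rewrite inE (negbTE wX).
rewrite !inY. by case: (u \in X); case: (v \in X).
Qed.

Lemma ANT (T : finType) (E : rel T) (X Y : {set T}) (t : nat) (x y : T)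
  (Xs Ys : {set T}) :
  simple_graph E -> bipartition E X Y -> E x y ->
  Xs \subset nbhd E y -> x \notin Xs -> Ys \subset nbhd E x -> y \notin Ys ->
  (t <= #|Xs|)%N -> (t <= #|Ys|)%N ->
  (forall p q, p \in Xs -> q \in Ys -> ~~ E p q) -> has_induced_biclaw E t t.
Proof.
move=> [Esym Eirr] hb Exy sX xX sY yY tX tY hXY.
have se := side_edge hb.
pose f (u : biclaw_vtx t t) : T := match u with
 | inl (inl _) => x | inl (inr _) => y
 | inr (inl i) => nth x (enum Xs) i | inr (inr j) => nth y (enum Ys) j end.
have fX (i : 'I_t) : nth x (enum Xs) i \in Xs.
  by rewrite -mem_enum mem_nth // -cardE (leq_trans (ltn_ord i)).
have fY (j : 'I_t) : nth y (enum Ys) j \in Ys.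
  by rewrite -mem_enum mem_nth // -cardE (leq_trans (ltn_ord j)).
have nbX p : p \in Xs -> E y p by move=> /(subsetP sX); rewrite inE.
have nbY q : q \in Ys -> E x q by move=> /(subsetP sY); rewrite inE.
have sideX p : p \in Xs -> (p \in X) = (x \in X).
  by move=> /nbX /se h; rewrite (se _ _ Exy) h negbK.
have sideY q : q \in Ys -> (q \in X) = (y \in X).
  by move=> /nbY /se h; apply/negb_inj; rewrite -h (se _ _ Exy).
have noE u v : (u \in X) = (v \in X) -> E u v = false.
  move=> h; apply/negbTE/negP=> /se; rewrite h. by case: (v \in X).
have sxy : (x \in X) = ~~ (y \in X) by rewrite (se _ _ Exy).
have niX (i j : 'I_t) : nth x (enum Xs) i = nth x (enum Xs) j -> i = j.
  move=> h; apply/val_inj/eqP.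
  by rewrite -(nth_uniq x _ _ (enum_uniq (mem Xs))) ?h // -cardE (leq_trans (ltn_ord _)).
have niY (i j : 'I_t) : nth y (enum Ys) i = nth y (enum Ys) j -> i = j.
  move=> h; apply/val_inj/eqP.
  by rewrite -(nth_uniq y _ _ (enum_uniq (mem Ys))) ?h // -cardE (leq_trans (ltn_ord _)).
exists f; split.
  move=> [[[]|[]]|[i|i]] [[[]|[]]|[j|j]] //= h.
  - by move: sxy; rewrite h; case: (y \in X).
  - by move: xX; rewrite h fX.
  - by move: sxy; rewrite h sideY //; case: (y \in X).
  - by move: sxy; rewrite h; case: (x \in X).
  - by move: sxy; rewrite h sideX //; case: (x \in X).
  - by move: yY; rewrite h fY.
  - by move: xX; rewrite -h fX.
  - by move: sxy; rewrite -h sideX //; case: (x \in X).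
  - by rewrite (niX _ _ h).
  - by move: sxy; rewrite -(sideY _ (fY j)) -h sideX //; case: (x \in X).
  - by move: sxy; rewrite -(sideY _ (fY i)) h; case: (x \in X).
  - by move: yY; rewrite -h fY.
  - by move: sxy; rewrite -(sideY _ (fY i)) h sideX //; case: (x \in X).
  - by rewrite (niY _ _ h).
move=> [[[]|[]]|[i|i]] [[[]|[]]|[j|j]] /=.
- exact: Eirr.
- exact: Exy.
- by apply: noE; rewrite sideX.
- exact: nbY.
- by rewrite Esym.
- exact: Eirr.
- exact: nbX.
- by apply: noE; rewrite sideY.
- by apply: noE; rewrite sideX.
- by rewrite Esym nbX.
- by apply: noE; rewrite !sideX.
- exact/negbTE/hXY.
- by rewrite Esym nbY.
- by apply: noE; rewrite sideY.
- by rewrite Esym; apply/negbTE/hXY.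
- by apply: noE; rewrite !sideY.
Qed.

Lemma card_sumb (T : finType) (A : {set T}) (P : pred T) :
  #|[set x in A | P x]| = (\sum_(x in A) P x)%N.
Proof.
rewrite -sum1_card big_mkcond [RHS]big_mkcond /=.
apply: eq_bigr => x _; rewrite !inE. by case: (x \in A); case: (P x).
Qed.

Lemma CL_iter (R : realType) (T : finType) (E : rel T) (t : nat) (e : R)
  (S Bad : {set T}) :
  0 < e -> e <= 1 -> 2 * t%:R <= e * #|S|%:R ->
  (forall q, q \in Bad -> e * #|S|%:R < #|S :\: nbhd E q|%:R) ->
  forall k, (k <= t)%N -> exists Sk Qk : {set T},
    [/\ Sk \subset S, #|Sk| = k, Qk \subset Bad,
     (e/2)^+k * #|Bad|%:R <= #|Qk|%:R & forall q s, q \in Qk -> s \in Sk -> ~~ E q s].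
Proof.
move=> e0 e1 hS hB; elim=> [|k IH] hk.
  exists set0, Bad; split => //; rewrite ?sub0set ?cards0 ?expr0 ?mul1r //.
  by move=> q s _; rewrite inE.
have [Sk [Qk [sS cSk sQ hQ hE]]] := IH (ltnW hk).
set A := S :\: Sk.
have cA : (#|S| <= #|A| + k)%N.
  rewrite -cSk; apply: leq_trans (leq_card_setU A Sk).
  apply: subset_leq_card; apply/subsetP=> s sS'; rewrite !inE.
  by case: (s \in Sk); rewrite ?orbT ?sS'.
have Sbig : (t <= #|S|)%N.
  rewrite -(ler_nat R).
  have := ler_piMl (ler0n R #|S|) e1. have := ler0n R t. lra.
have Apos : (0 < #|A|)%N by move: hk Sbig cA; lia.
pose cnt s := #|[set q in Qk | ~~ E q s]|.
have dc : (\sum_(s in A) cnt s = \sum_(q in Qk) #|A :\: nbhd E q|)%N.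
  rewrite /cnt.
  under eq_bigr do rewrite card_sumb.
  rewrite exchange_big /=. apply: eq_bigr => q _.
  rewrite -card_sumb; apply: eq_card => s; rewrite /nbhd !inE.
  by rewrite andbC.
have lb q : q \in Qk -> e * #|S|%:R - k%:R <= #|A :\: nbhd E q|%:R :> R.
  move=> qQ. have h1 := hB q (subsetP sQ q qQ).
  have h2 : (#|S :\: nbhd E q| <= #|A :\: nbhd E q| + k)%N.
    rewrite -cSk; apply: leq_trans (leq_card_setU _ _).
    apply: subset_leq_card; apply/subsetP=> s; rewrite /nbhd !inE.
    by case: (s \in Sk); case: (E q s); case: (s \in S).
  move: h2; rewrite -(ler_nat R) natrD => h2. lra.
have ex : exists2 s, s \in A & (e/2) * #|Qk|%:R <= (cnt s)%:R.
  case/boolP: [exists s in A, (e/2) * #|Qk|%:R <= (cnt s)%:R] =>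
     [/exists_inP//|/exists_inPn hn].
  exfalso.
  have [s0 s0A] : exists s0, s0 \in A.
    by apply/set0Pn; rewrite -card_gt0.
  have hlt : \sum_(s in A) (cnt s)%:R < \sum_(s in A) ((e/2) * #|Qk|%:R) :> R.
    apply: ltr_sum.
      by apply/hasP; exists s0 => //; rewrite mem_index_enum.
    by move=> s sA; rewrite ltNge; exact: hn.
  have hge : #|Qk|%:R * (e * #|S|%:R / 2) <= \sum_(s in A) (cnt s)%:R :> R.
    rewrite -natr_sum dc natr_sum.
    apply: le_trans (ler_sum _ lb).
    rewrite sumr_const -[X in _ <= X]mulr_natl.
    apply: ler_wpM2l => //.
    have : (k.+1 <= t)%N := hk. rewrite -(ler_nat R) => hk'.
    rewrite -natr1 in hk'. lra.
  rewrite sumr_const -mulr_natr in hlt.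
  have hA : (e / 2 * #|Qk|%:R) * #|A|%:R <= (e / 2 * #|Qk|%:R) * #|S|%:R.
    apply: ler_wpM2l.
      apply: mulr_ge0 => //. lra.
    rewrite ler_nat. move: cA hk Sbig. rewrite /A. 
    have : (#|S :\: Sk| <= #|S|)%N by apply: subset_leq_card; apply: subsetDl.
    done.
  have eq1 : (e / 2 * #|Qk|%:R) * #|S|%:R = #|Qk|%:R * (e * #|S|%:R / 2).
    by ring.
  lra.
case: ex => s sA hs.
have sS0 : s \notin Sk by move: sA; rewrite !inE => /andP[].
exists (s |: Sk), [set q in Qk | ~~ E q s]; split.
- apply/subsetP=> s'; rewrite !inE => /orP[/eqP->|].
    by move: sA; rewrite !inE => /andP[].
  exact: (subsetP sS).
- by rewrite cardsU1 cSk sS0.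
- by apply/subsetP => q; rewrite inE => /andP[qQ _]; exact: (subsetP sQ).
- rewrite exprS -mulrA. apply: le_trans hs. apply: ler_wpM2l => //. lra.
- move=> q s'; rewrite !inE => /andP[qQ nE] /orP[/eqP->|s'S] //.
  exact: hE.
Qed.

Lemma CL (R : realType) (T : finType) (E : rel T) (X Y : {set T}) (t : nat)
  (e : R) (x y : T) (S Bad : {set T}) :
  simple_graph E -> bipartition E X Y -> 0 < e -> e <= 1 -> E x y ->
  S \subset nbhd E x -> y \notin S -> 2 * t%:R <= e * #|S|%:R ->
  Bad \subset nbhd E y ->
  (forall q, q \in Bad -> e * #|S|%:R < #|S :\: nbhd E q|%:R) ->
  t%:R <= (e/2)^+t * #|Bad|%:R -> has_induced_biclaw E t t.
Proof.
move=> sg hb e0 e1 Exy sS yS hS sB hB ht.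
have [St [Qt [sSt cSt sQt hQt hE]]] := CL_iter e0 e1 hS hB (leqnn t).
apply: (ANT sg hb Exy (Xs := Qt) (Ys := St)).
- exact: subset_trans sQt sB.
- apply/negP => /(subsetP sQt) /hB.
  have -> : S :\: nbhd E x = set0 by apply/eqP; rewrite setD_eq0.
  rewrite cards0. have := ler0n R #|S|. move=> h1 h2.
  have : 0 <= e * #|S|%:R by apply: mulr_ge0 => //; exact: ltW.
  lra.
- exact: subset_trans sSt sS.
- by apply/negP => /(subsetP sSt) /(negP yS).
- by rewrite -(ler_nat R); exact: le_trans ht hQt.
- by rewrite cSt.
- by move=> p q pQ qS; exact: hE.
Qed.

Definition Mb (R : realType) (t : nat) (e : R) : R := t%:R / (e/2)^+t.

Lemma Mb_ge0 (R : realType) t (e : R) : 0 < e -> 0 <= Mb t e.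
Proof.
move=> e0; rewrite /Mb; apply: divr_ge0 => //; apply: exprn_ge0; lra.
Qed.

Lemma CLb (R : realType) (T : finType) (E : rel T) (X Y : {set T}) (t : nat)
  (e : R) (x y : T) (S : {set T}) :
  simple_graph E -> bipartition E X Y -> ~ has_induced_biclaw E t t ->
  0 < e -> e <= 1 -> E x y ->
  S \subset nbhd E x -> y \notin S -> 2 * t%:R <= e * #|S|%:R ->
  #|[set q in nbhd E y | e * #|S|%:R < #|S :\: nbhd E q|%:R]|%:R < Mb t e.
Proof.
move=> sg hb nb e0 e1 Exy sS yS hS.
rewrite ltNge; apply/negP => h; apply: nb.
apply: (CL sg hb e0 e1 Exy sS yS hS (Bad := [set q in nbhd E y | e * #|S|%:R < #|S :\: nbhd E q|%:R])).
- by apply/subsetP => q; rewrite inE => /andP[].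
- by move=> q; rewrite inE => /andP[].
have p0 : 0 < (e/2)^+t by apply: exprn_gt0; lra.
move: h; rewrite /Mb ler_pdivrMr //. by rewrite mulrC.
Qed.

Lemma card3 (T : finType) (A B C : {set T}) (w : T) :
  A \subset B :|: ([set w] :|: C) -> (#|A| <= #|B| + 1 + #|C|)%N.
Proof.
move=> /subset_leq_card h; apply: leq_trans h _.
apply: leq_trans (leq_card_setU _ _) _. rewrite -addnA leq_add2l.
by apply: leq_trans (leq_card_setU _ _) _; rewrite cards1.
Qed.

Lemma TR (R : realType) (T : finType) (E : rel T) (X Y : {set T}) (t : nat)
  (e : R) (a c1 w : T) (beta : R) :
  simple_graph E -> bipartition E X Y -> ~ has_induced_biclaw E t t ->
  0 < e -> e <= 1 -> E c1 w ->
  #|nbhd E a :\: nbhd E c1|%:R <= beta ->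
  2 * t%:R <= e * (#|nbhd E a|%:R - beta - 1) ->
  exists Bad : {set T}, #|Bad|%:R < Mb t e /\
    forall q, q \in nbhd E w -> q \notin Bad ->
      #|nbhd E a :\: nbhd E q|%:R <= beta + 1 + e * #|nbhd E a|%:R.
Proof.
move=> sg hb nb e0 e1 Ecw hbeta h2t.
set Na := nbhd E a.
set S3 := (Na :&: nbhd E c1) :\ w.
have c3 : (#|Na| <= #|Na :\: nbhd E c1| + 1 + #|S3|)%N.
  apply: (card3 (w := w)); apply/subsetP => s; rewrite /S3 /Na /nbhd !inE => ->.
  by case: (E c1 s); case: (s == w).
have sS3 : S3 \subset nbhd E c1.
  by apply/subsetP => s; rewrite /S3 !inE => /andP[_ /andP[_ ->]].
have wS3 : w \notin S3 by rewrite /S3 !inE eqxx.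
have cS3le : (#|S3| <= #|Na|)%N.
  by apply: subset_leq_card; apply/subsetP=> s; rewrite /S3 !inE => /andP[_ /andP[->]].
have h3 : 2 * t%:R <= e * #|S3|%:R.
  apply: le_trans h2t _. apply: ler_wpM2l; first exact: ltW.
  move: c3; rewrite -(ler_nat R) !natrD => c3. lra.
have hB := CLb sg hb nb e0 e1 Ecw sS3 wS3 h3.
exists [set q in nbhd E w | e * #|S3|%:R < #|S3 :\: nbhd E q|%:R]; split => // q qN qB.
have hq : #|S3 :\: nbhd E q|%:R <= e * #|S3|%:R.
  by move: qB; rewrite inE qN /= -leNgt.
have c4 : (#|Na :\: nbhd E q| <= #|Na :\: nbhd E c1| + 1 + #|S3 :\: nbhd E q|)%N.
  apply: (card3 (w := w)); apply/subsetP => s; rewrite /S3 /Na /nbhd !inE => /andP[-> ->].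
  by case: (E c1 s); case: (s == w).
have h5 : e * #|S3|%:R <= e * #|Na|%:R.
  by apply: ler_wpM2l; [exact: ltW | rewrite ler_nat].
move: c4; rewrite -(ler_nat R) !natrD => c4. lra.
Qed.

Lemma HALF (R : realType) (T : finType) (E : rel T) (X Y : {set T}) (t : nat)
  (e : R) (a z v : T) :
  simple_graph E -> bipartition E X Y -> ~ has_induced_biclaw E t t ->
  (0 < t)%N -> 0 < e -> e < 1 -> E a z -> E z v ->
  2 * t%:R <= e * (#|nbhd E a|%:R - 1) ->
  2 * t%:R <= e * (#|nbhd E z|%:R - Mb t e - 1) ->
  exists Bad : {set T}, #|Bad|%:R < Mb t e /\
    forall w, w \in nbhd E v -> w \notin Bad ->
      exists c1, [/\ E w c1, E z c1 &
        #|nbhd E a :\: nbhd E c1|%:R <= 1 + e * #|nbhd E a|%:R].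
Proof.
move=> sg hb nb t0 e0 e1 Eaz Ezv h1 h2.
have e1' : e <= 1 by exact: ltW.
have := @TR R T E X Y t e a a z 0 sg hb nb e0 e1' Eaz.
rewrite setDv cards0 subr0 => /(_ (lexx _) h1) [B1 [cB1 hB1]].
set S2 := (nbhd E z :\: B1) :\ v.
have c2 : (#|nbhd E z| <= #|B1| + 1 + #|S2|)%N.
  apply: (card3 (w := v)); apply/subsetP => s; rewrite /S2 /nbhd !inE => ->.
  by case: (s \in B1); case: (s == v).
have sS2 : S2 \subset nbhd E z.
  by apply/subsetP => s; rewrite /S2 !inE => /andP[_ /andP[_ ->]].
have vS2 : v \notin S2 by rewrite /S2 !inE eqxx.
have h3 : 2 * t%:R <= e * #|S2|%:R.
  apply: le_trans h2 _. apply: ler_wpM2l; first exact: ltW.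
  move: c2; rewrite -(ler_nat R) !natrD => c2. lra.
have hB := CLb sg hb nb e0 e1' Ezv sS2 vS2 h3.
exists [set w in nbhd E v | e * #|S2|%:R < #|S2 :\: nbhd E w|%:R]; split => // w wN wB.
have hw : #|S2 :\: nbhd E w|%:R <= e * #|S2|%:R.
  by move: wB; rewrite inE wN /= -leNgt.
have [c1 c1S Ewc] : exists2 c1, c1 \in S2 & E w c1.
  case/boolP: [exists c in S2, E w c] => [/exists_inP[c ? ?]| /exists_inPn hn].
    by exists c.
  exfalso.
  have eqS : S2 :\: nbhd E w = S2.
    apply/setP => s; rewrite [in LHS]inE /nbhd inE.
    by case sS: (s \in S2); rewrite ?andbT ?andbF // hn.
  rewrite eqS in hw.
  have t1 : 1 <= t%:R :> R by rewrite ler1n.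
  have : 0 < #|S2|%:R :> R by nra.
  nra.
exists c1; split => //.
  by move: (subsetP sS2 c1 c1S); rewrite inE.
have c1B : c1 \notin B1 by move: c1S; rewrite /S2 !inE => /andP[_ /andP[]].
have c1N : c1 \in nbhd E z by exact: (subsetP sS2).
by have := hB1 c1 c1N c1B; rewrite add0r.
Qed.

Lemma pickS (T : finType) (A B : {set T}) :
  (#|B| < #|A|)%N -> exists2 q, q \in A & q \notin B.
Proof.
move=> h; case/boolP: [exists q in A, q \notin B] => [/exists_inP//|/exists_inPn hn].
exfalso; have : A \subset B by apply/subsetP => q /hn; rewrite negbK.
by move/subset_leq_card; rewrite leqNgt h.
Qed.

Definition near (T : finType) (E : rel T) (a b : T) : Prop :=
  exists z1 m z2, [/\ E a z1, E z1 m, E m z2 & E z2 b].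

Definition Kc (R : realType) (t : nat) (e : R) : R := 2 * t%:R / (e/4).
Definition Dd (R : realType) (t : nat) (e : R) : R :=
  2 * Kc t e + 2 * Mb t (e/4) + 4 / e + 8.

Lemma pick2 (R : realType) (T : finType) (A B1 B2 : {set T}) (M : R) :
  #|B1|%:R < M -> #|B2|%:R < M -> 2 * M <= #|A|%:R ->
  exists q, [/\ q \in A, q \notin B1 & q \notin B2].
Proof.
move=> h1 h2 h3.
have : (#|B1 :|: B2| < #|A|)%N.
  rewrite -(ltr_nat R). apply: le_lt_trans (_ : (#|B1| + #|B2|)%:R < _).
    by rewrite ler_nat; exact: leq_card_setU.
  rewrite natrD. lra.
move/pickS => [q qA]; rewrite inE negb_or => /andP[q1 q2].
by exists q.
Qed.

Lemma DOM (R : realType) (T : finType) (E : rel T) (X Y : {set T}) (t : nat)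
  (e : R) :
  simple_graph E -> bipartition E X Y -> ~ has_induced_biclaw E t t ->
  (0 < t)%N -> 0 < e -> e < 1 ->
  (forall v, Dd t e <= #|nbhd E v|%:R) ->
  forall a b, near E a b -> exists q, near E a q /\
     (#|nbhd E a :\: nbhd E q|%:R <= e * #|nbhd E a|%:R /\
      #|nbhd E b :\: nbhd E q|%:R <= e * #|nbhd E b|%:R).
Proof.
move=> sg hb nb t0 e0 e1 hD a b [z1 [m [z2 [Eaz1 Ez1m Emz2 Ez2b]]]].
have [Esym _] := sg.
pose f := e / 4.
have f0 : 0 < f by rewrite /f; lra.
have f1 : f < 1 by rewrite /f; lra.
have f1' : f <= 1 by rewrite /f; lra.
have fn0 : f != 0 by rewrite gt_eqF.
pose K := Kc t e.
have fK : f * K = 2 * t%:R.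
  by rewrite /K /Kc -/f mulrCA mulfV ?mulr1.
have K0 : 0 <= K by rewrite /K /Kc; apply: divr_ge0; have := ler0n R t; lra.
have M0 : 0 <= Mb t f := Mb_ge0 t f0.
have i4 : 0 <= 4 / e by apply: divr_ge0; lra.
have Dn v : 2 * K + 2 * Mb t f + 4 / e + 8 <= #|nbhd E v|%:R := hD v.
have hf x : K <= x -> 2 * t%:R <= f * x.
  by move=> h; rewrite -fK; apply: ler_wpM2l => //; exact: ltW.
have hN v : K <= #|nbhd E v|%:R - 1.
  by have := Dn v; lra.
have hM v : K <= #|nbhd E v|%:R - Mb t f - 1.
  by have := Dn v; lra.
have [BA [cBA hBA]] := HALF sg hb nb t0 f0 f1 Eaz1 Ez1m (hf _ (hN a)) (hf _ (hM z1)).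
have Ebz2 : E b z2 by rewrite Esym.
have Ez2m : E z2 m by rewrite Esym.
have [BB [cBB hBB]] := HALF sg hb nb t0 f0 f1 Ebz2 Ez2m (hf _ (hN b)) (hf _ (hM z2)).
have h2M v : 2 * Mb t f <= #|nbhd E v|%:R.
  by have := Dn v; lra.
have [w [wN wA wB]] := pick2 cBA cBB (h2M m).
have [c1 [Ewc1 Ez1c1 hc1]] := hBA w wN wA.
have [c2 [Ewc2 Ez2c2 hc2]] := hBB w wN wB.
have fn v : f * #|nbhd E v|%:R <= #|nbhd E v|%:R / 4.
  have := ler_piMl (ler0n R #|nbhd E v|) (ltW e1); rewrite /f; lra.
have Ec1w : E c1 w by rewrite Esym.
have Ec2w : E c2 w by rewrite Esym.
have h3 v : K <= #|nbhd E v|%:R - (1 + f * #|nbhd E v|%:R) - 1.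
  by have := Dn v; have := fn v; lra.
have [B3 [cB3 hB3]] := TR sg hb nb f0 f1' Ec1w hc1 (hf _ (h3 a)).
have [B4 [cB4 hB4]] := TR sg hb nb f0 f1' Ec2w hc2 (hf _ (h3 b)).
have [q [qN qA qB]] := pick2 cB3 cB4 (h2M w).
exists q; split.
  exists z1, c1, w; split => //. by move: qN; rewrite inE.
have e4 : e * (4 / e) = 4 by rewrite mulrCA mulfV ?mulr1 // gt_eqF.
have big v : 4 <= e * #|nbhd E v|%:R.
  rewrite -e4; apply: ler_wpM2l; first exact: ltW. have := Dn v; lra.
have := hB3 q qN qA; have := hB4 q qN qB; have := big a; have := big b.
rewrite /f. lra.
Qed.

Lemma common (T : finType) (A B : {set T}) :
  (#|A :\: B| < #|A|)%N -> exists2 z, z \in A & z \in B.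
Proof.
move/pickS => [z zA]; rewrite inE zA andbT negbK => zB. by exists z.
Qed.

Lemma notX (T : finType) (E : rel T) (W Ys : {set T}) (u z : T) :
  z \in W -> z != u -> z \notin [set v in W :\ u | [forall y in Ys, ~~ E v y]] ->
  exists2 y, y \in Ys & E z y.
Proof.
move=> zW zu; rewrite inE !inE zu zW /=.
case/boolP: [exists y in Ys, E z y] => [/exists_inP//|/exists_inPn hn].
by move/forall_inP => []; move=> y /hn.
Qed.

Lemma Xsmall (T : finType) (E : rel T) (X Y : {set T}) (t : nat) (x y : T)
  (Ys : {set T}) :
  simple_graph E -> bipartition E X Y -> ~ has_induced_biclaw E t t ->
  E x y -> Ys \subset nbhd E x -> y \notin Ys -> (t <= #|Ys|)%N ->
  (#|[set v in nbhd E y :\ x | [forall q in Ys, ~~ E v q]]| < t)%N.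
Proof.
move=> sg hb nb Exy sY yY tY; rewrite ltnNge; apply/negP => h; apply: nb.
apply: (ANT sg hb Exy _ _ sY yY h tY).
- by apply/subsetP => v; rewrite !inE => /andP[/andP[_ ->]].
- by rewrite !inE eqxx.
- by move=> p q; rewrite inE => /andP[_ /forall_inP H] /H.
Qed.

Lemma card4 (T : finType) (A B C : {set T}) (w1 w2 : T) :
  A \subset B :|: ([set w1] :|: ([set w2] :|: C)) -> (#|A| <= #|B| + 2 + #|C|)%N.
Proof.
move=> /subset_leq_card h; apply: leq_trans h _.
apply: leq_trans (leq_card_setU _ _) _. rewrite -addnA leq_add2l.
apply: leq_trans (leq_card_setU _ _) _; rewrite cards1.
have h2 : (#|[set w2] :|: C| <= 1 + #|C|)%N.
  by rewrite -(cards1 w2); exact: leq_card_setU.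
lia.
Qed.

Lemma Mb_ge0' (R : realType) t : 0 <= Mb t (1/2 : R).
Proof. apply: Mb_ge0; lra. Qed.

Lemma Dd_ge0 (R : realType) t (e : R) : 0 < e -> 0 <= Dd t e.
Proof.
move=> e0; rewrite /Dd /Kc.
have h1 : 0 <= 2 * t%:R / (e/4) by apply: divr_ge0; [have := ler0n R t; lra | lra].
have h2 : 0 <= Mb t (e/4) by apply: Mb_ge0; lra.
have h3 : 0 <= 4 / e by apply: divr_ge0; lra.
lra.
Qed.

Definition Dstep (R : realType) (t : nat) : R :=
  Dd t (1/2 : R) + (4 * t + 4)%:R + Mb t (1/2 : R).


Lemma arith1 (n d y t : nat) : (n <= d + 1 + y)%N -> (2 * d <= n)%N ->
  (4 * t + 4 <= n)%N -> (t <= y)%N.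
Proof. lia. Qed.

Lemma arith2 (x1 x2 n t : nat) : (x1 < t)%N -> (x2 < t)%N -> (4 * t + 4 <= n)%N ->
  (x1 + (x2 + (1 + 1)) < n)%N.
Proof. lia. Qed.

Lemma STEP (R : realType) (T : finType) (E : rel T) (X Y : {set T}) (t : nat) :
  simple_graph E -> bipartition E X Y -> ~ has_induced_biclaw E t t ->
  (0 < t)%N -> (forall v, Dstep R t <= #|nbhd E v|%:R) ->
  forall a u w b, near E a u -> E u w -> E w b -> near E a b.
Proof.
move=> sg hb nb t0 hD a u w b nau Euw Ewb.
have [Esym Eirr] := sg.
have DD v : Dd t (1/2 : R) <= #|nbhd E v|%:R.
  have := hD v; have := Mb_ge0' R t; rewrite /Dstep; have := ler0n R (4 * t + 4). lra.
have DM v : (4 * t + 4)%:R + Mb t (1/2 : R) <= #|nbhd E v|%:R.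
  have := hD v; have := Dd_ge0 t (_ : 0 < 1/2 :> R); rewrite /Dstep.
  move=> h; have {h} := h ltac:(lra). lra.
have Dn v : (4 * t + 4 <= #|nbhd E v|)%N.
  rewrite -(ler_nat R); have := DM v; have := Mb_ge0' R t; lra.
have h12 : (0 : R) < 1/2 by lra.
have h12' : (1/2 : R) < 1 by lra.
have dom := DOM sg hb nb t0 h12 h12' DD.
have [c [_ [hca hcu]]] := dom a u nau.
have nat2 v c' : #|nbhd E v :\: nbhd E c'|%:R <= 1/2 * #|nbhd E v|%:R :> R ->
    (2 * #|nbhd E v :\: nbhd E c'| <= #|nbhd E v|)%N.
  by move=> h; rewrite -(ler_nat R) ?natrM; lra.
have hcu' := nat2 _ _ hcu.
pose Y0 := (nbhd E u :&: nbhd E c) :\ w.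
have cY0 : (t <= #|Y0|)%N.
  have : (#|nbhd E u| <= #|nbhd E u :\: nbhd E c| + 1 + #|Y0|)%N.
    apply: (card3 (w := w)); apply/subsetP => s; rewrite /Y0 /nbhd !inE => ->.
    by case: (E c s); case: (s == w).
  move=> h; exact: arith1 h hcu' (Dn u).
have sY0 : Y0 \subset nbhd E u.
  by apply/subsetP => s; rewrite /Y0 !inE => /andP[_ /andP[->]].
have wY0 : w \notin Y0 by rewrite /Y0 !inE eqxx.
have cX := Xsmall sg hb nb Euw sY0 wY0 cY0.
set Xs := [set v in nbhd E w :\ u | _] in cX.
have Ebw : E b w by rewrite Esym.
pose S := nbhd E b :\ w.
have sS : S \subset nbhd E b by apply/subsetP => s; rewrite /S !inE => /andP[].
have wS : w \notin S by rewrite /S !inE eqxx.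
have cS : (#|nbhd E b| <= #|S| + 1)%N.
  by rewrite /S (cardsD1 w (nbhd E b)) addnC leq_add2l leq_b1.
have hS : 2 * t%:R <= 1/2 * #|S|%:R :> R.
  have := Dn b. move: cS. rewrite -!(ler_nat R) !natrD ?natrM. lra.
have cB := CLb sg hb nb h12 (ltW h12') Ebw sS wS hS.
set Bad := [set q in nbhd E w | _] in cB.
have [v [vN vX vB]] : exists v, [/\ v \in nbhd E w, v \notin Xs & v \notin Bad :|: [set u]].
  have : (#|Xs :|: (Bad :|: [set u])| < #|nbhd E w|)%N.
    rewrite -(ltr_nat R).
    apply: le_lt_trans (_ : (#|Xs| + #|Bad| + 1)%:R < _).
      rewrite ler_nat -addnA. apply: leq_trans (leq_card_setU _ _) _.
      rewrite leq_add2l. rewrite -(cards1 u). exact: leq_card_setU.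
    have := DM w. move: cX; rewrite -(ltr_nat R) => cX'. rewrite !natrD ?natrM. 
    have := ler0n R t. lra.
  move/pickS => [v vN]; rewrite !in_setU !negb_or => /and3P[vX vB vu].
  by exists v; rewrite vN vX in_setU negb_or vB vu.
move: vB; rewrite in_setU negb_or in_set1 => /andP[vB vu].
have [y yY Evy] := notX vN vu vX.
have Ecy : E c y by move: yY; rewrite /Y0 !inE => /andP[_ /andP[_ ->]].
have [z za zc] : exists2 z, z \in nbhd E a & z \in nbhd E c.
  apply: common. rewrite -(ltr_nat R).
  have : (0 : R) < #|nbhd E a|%:R.
    have := Dn a; rewrite -(ler_nat R) natrD ?natrM => h. have := ler0n R t. lra.
  lra.
have nav : near E a v.
  exists z, c, y; split.
  - by move: za; rewrite inE.
  - by move: zc; rewrite inE Esym.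
  - exact: Ecy.
  - by rewrite Esym.
have [c' [_ [hca' hcv']]] := dom a v nav.
have [w' w'v w'c] : exists2 w', w' \in nbhd E v & w' \in nbhd E c'.
  apply: common. rewrite -(ltr_nat R).
  have : (0 : R) < #|nbhd E v|%:R.
    have := Dn v; rewrite -(ler_nat R) natrD ?natrM => h. have := ler0n R t. lra.
  lra.
have Evw' : E v w' by move: w'v; rewrite inE.
have Ecw' : E c' w' by move: w'c; rewrite inE.
pose Y1 := (nbhd E a :&: nbhd E c') :\ w'.
have hca'' := nat2 _ _ hca'.
have cY1 : (t <= #|Y1|)%N.
  have : (#|nbhd E a| <= #|nbhd E a :\: nbhd E c'| + 1 + #|Y1|)%N.
    apply: (card3 (w := w')); apply/subsetP => s; rewrite /Y1 /nbhd !inE => ->.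
    by case: (E c' s); case: (s == w').
  move=> h; exact: arith1 h hca'' (Dn a).
have sY1 : Y1 \subset nbhd E c'.
  by apply/subsetP => s; rewrite /Y1 !inE => /andP[_ /andP[_ ->]].
have w'Y1 : w' \notin Y1 by rewrite /Y1 !inE eqxx.
have cX1 := Xsmall sg hb nb Ecw' sY1 w'Y1 cY1.
set X1 := [set v in nbhd E w' :\ c' | _] in cX1.
pose Y2 := (nbhd E b :&: nbhd E v) :\ w'.
have hvB : #|S :\: nbhd E v|%:R <= 1/2 * #|S|%:R :> R.
  by move: vB; rewrite /Bad inE vN /= -leNgt.
have cY2 : (t <= #|Y2|)%N.
  have h4 : (#|nbhd E b| <= #|S :\: nbhd E v| + 2 + #|Y2|)%N.
    apply: (card4 (w1 := w) (w2 := w')); apply/subsetP => s.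
    rewrite /Y2 /S /nbhd !inE => ->.
    by case: (E v s); case: (s == w); case: (s == w').
  have h5 : (#|S| <= #|nbhd E b|)%N by apply: subset_leq_card.
  have := Dn b. move: h4 h5. rewrite -!(ler_nat R) !natrD ?natrM => h4 h5 h6.
  have := ler0n R t. lra.
have sY2 : Y2 \subset nbhd E v.
  by apply/subsetP => s; rewrite /Y2 !inE => /andP[_ /andP[_ ->]].
have w'Y2 : w' \notin Y2 by rewrite /Y2 !inE eqxx.
have cX2 := Xsmall sg hb nb Evw' sY2 w'Y2 cY2.
set X2 := [set v0 in nbhd E w' :\ v | _] in cX2.
have : (#|X1 :|: (X2 :|: ([set c'] :|: [set v]))| < #|nbhd E w'|)%N.
  apply: leq_ltn_trans (_ : (#|X1| + (#|X2| + (1 + 1)) < _)%N).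
    apply: leq_trans (leq_card_setU _ _) _; rewrite leq_add2l.
    apply: leq_trans (leq_card_setU _ _) _; rewrite leq_add2l.
    apply: leq_trans (leq_card_setU _ _) _; by rewrite !cards1.
  exact: arith2 cX1 cX2 (Dn w').
move/pickS => [z' z'N]; rewrite !in_setU !negb_or !in_set1 => /and4P[z'X1 z'X2 z'c z'v].
have [y1 y1Y Ey1] := notX z'N z'c z'X1.
have [y2 y2Y Ey2] := notX z'N z'v z'X2.
exists y1, z', y2; split.
- by move: y1Y; rewrite /Y1 !inE => /andP[_ /andP[]].
- by rewrite Esym.
- exact: Ey2.
- by move: y2Y; rewrite /Y2 !inE => /andP[_ /andP[]]; rewrite Esym.
Qed.


Lemma inYX (T : finType) (E : rel T) (X Y : {set T}) :
  bipartition E X Y -> forall w, (w \in Y) = (w \notin X).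
Proof.
case=> XY0 XYT _ w.
apply/idP/idP => [wY|wX].
  apply/negP=> wX. have: w \in X :&: Y by rewrite inE wX wY.
  by rewrite XY0 inE.
have: w \in X :|: Y by rewrite XYT inE.
by rewrite inE (negbTE wX).
Qed.

Lemma sideP (T : finType) (E : rel T) (X Y P : {set T}) :
  bipartition E X Y -> (P = X \/ P = Y) ->
  forall u v, E u v -> (u \in P) = ~~ (v \in P).
Proof.
move=> hb hP u v Euv; have h := side_edge hb Euv.
case: hP => ->; first by [].
by rewrite !(inYX hb) h negbK.
Qed.

Lemma nearP (T : finType) (E : rel T) (X Y P : {set T}) :
  bipartition E X Y -> (P = X \/ P = Y) ->
  forall a b, near E a b -> (a \in P) = (b \in P).
Proof.
move=> hb hP a b [z1 [m [z2 [h1 h2 h3 h4]]]].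
by rewrite (sideP hb hP h1) (sideP hb hP h2) (sideP hb hP h3) (sideP hb hP h4) !negbK.
Qed.

Definition Cfun (R : realType) (t : nat) (eps : R) : R := Dd t eps + Dstep R t.

Unset Implicit Arguments.

Theorem mainTheorem12 (R : realType) :
  exists C : nat -> R -> R,
  forall (t : nat) (eps : R), (0 < t)%N -> 0 < eps < 1 ->
  forall (T : finType) (E : rel T) (X Y : {set T}),
    simple_graph E ->
    connected_graph E ->
    bipartition E X Y ->
    #|X| = #|Y| ->
    (forall v : T, 3%:R * C t eps <= (#|nbhd E v|)%:R) ->
    ~ has_induced_biclaw E t t ->
    forall P : {set T}, (P = X \/ P = Y) ->
    forall a b : T, a \in P -> b \in P ->
    exists2 c : T, c \in P &
      ((#|nbhd E a :\: nbhd E c|)%:R <= eps * (#|nbhd E a|)%:R) /\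
      ((#|nbhd E b :\: nbhd E c|)%:R <= eps * (#|nbhd E b|)%:R).
Proof.
exists (fun t eps => Cfun t eps).
move=> t eps t0 /andP[e0 e1] T E X Y sg conn hb _ hdeg nb P hP a b aP bP.
have [Esym _] := sg.
have d1 := Dd_ge0 t e0.
have d2 : 0 <= Dd t (1/2 : R) by apply: Dd_ge0; lra.
have d3 := Mb_ge0' R t.
have d4 := ler0n R (4 * t + 4).
have Dde v : Dd t eps <= #|nbhd E v|%:R.
  by have := hdeg v; rewrite /Cfun /Dstep; lra.
have Dst v : Dstep R t <= #|nbhd E v|%:R.
  by have := hdeg v; rewrite /Cfun /Dstep; lra.
have Dn v : (0 < #|nbhd E v|)%N.
  rewrite -(ltr_nat R); have := Dst v; rewrite /Dstep.
  have : (0 : R) < (4 * t + 4)%:R by rewrite ltr0n addn4.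
  lra.
have reach b' : near E a b' \/ exists2 u, near E a u & E u b'.
  have := conn a b'. case/connectP => p pth ->.
  elim/last_ind: p pth => [|p z IH] /=.
    move=> _; left.
    have [z za] : exists z, z \in nbhd E a by apply/set0Pn; rewrite -card_gt0.
    move: za; rewrite inE => za.
    by exists z, a, z; split => //; rewrite Esym.
  rewrite rcons_path => /andP[pth Ez]; rewrite last_rcons.
  case: (IH pth) => [h|[u h Eu]].
    by right; exists (last a p).
  by left; exact: (STEP sg hb nb t0 Dst h Eu Ez).
have nab : near E a b.
  case: (reach b) => // [[u h Eu]]. exfalso.
  have h1 := nearP hb hP h; have h2 := sideP hb hP Eu.
  rewrite aP in h1; rewrite -h1 bP in h2. by [].
have [q [naq [h1 h2]]] := DOM sg hb nb t0 e0 e1 Dde nab.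
by exists q => //; rewrite -(nearP hb hP naq).
Qed.
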